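(* For every integer $k\ge 2$, no online algorithm achieves a competitive ratio better than $\frac76$ for the ATWC dispersion problem for arbitrary $k$-dimensional polytopes; that is, there is no online algorithm that is $\sigma$-competitive with $\sigma<\frac76$ for every $k$-dimensional polytope $P$.
   Context: Let $P\subset\mathbb{R}^k$ be a $k$-dimensional polytope with boundary $\partial P$; distances are Euclidean. An instance is a sequence $S=((s_1,d_1),\dots,(s_n,d_n))$ with $s_i<d_i$, $0=s_1\le\dots\le s_n$; point $i$ is present at time $t$ iff $s_i\le t\le d_i$; $T=\max_i d_i$. For locations $X=(X_1,\dots,X_n)\in P^n$, $d_{min}(t;X)=\min\{dis(X_i,\partial P),dis(X_i,X_j)\}$ over present points $i\ne j$ at time $t$, and $OPT_A(S;P)=\max_X\min_{t\le T}d_{min}(t;X)$. In the online ATWC problem, when point $i$ arrives the algorithm must irrevocably choose $X_i\in P$ knowing only past events (not future events nor $n$); an adaptive adversary who knows the algorithm chooses the events. An online algorithm is $\sigma$-competitive for $P$ if for every instance $S$, $OPT_A(S;P)\le\sigma\cdot\min_{t\le T}d_{min}(t;X)$ for its output $X$. *)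

(* Defs.v *)
From HB Require Import structures.
From mathcomp Require Import all_boot all_order all_algebra.
From mathcomp Require Import all_classical all_reals all_analysis.
Import numFieldNormedType.Exports.
Set Implicit Arguments. Unset Strict Implicit. Unset Printing Implicit Defensive.
Import Order.TTheory GRing.Theory Num.Theory.
Local Open Scope classical_set_scope.
Local Open Scope ring_scope.

Section ATWC.
Variables (R : realType) (k : nat).

Definition eucl (x y : 'rV[R]_k) : R :=
  Num.sqrt (\sum_(i < k) (x ord0 i - y ord0 i) ^+ 2).

Definition boundary (P : set 'rV[R]_k) : set 'rV[R]_k :=
  closure P `\` interior P.

Definition dis_bd (P : set 'rV[R]_k) (x : 'rV[R]_k) : R :=
  inf [set eucl x y | y in boundary P].

(* P is a k-dimensional polytope in R^k: the convex hull of finitely many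
   points v_0..v_{m-1} whose affine hull is all of R^k. *)
Definition kpolytope (P : set 'rV[R]_k) : Prop :=
  exists (m : nat) (v : 'I_m -> 'rV[R]_k),
    P = [set x | exists w : 'I_m -> R,
                   (forall j, 0 <= w j) /\ \sum_(j < m) w j = 1 /\
                   x = \sum_(j < m) w j *: v j]
    /\ (forall x : 'rV[R]_k, exists w : 'I_m -> R,
          \sum_(j < m) w j = 1 /\ x = \sum_(j < m) w j *: v j).

(* An instance: the sequence of pairs (s_i, d_i), indexed from 0. *)
Definition sT (S : seq (R * R)) (i : nat) : R := (nth (0, 0) S i).1.
Definition dT (S : seq (R * R)) (i : nat) : R := (nth (0, 0) S i).2.

Definition valid_instance (S : seq (R * R)) : Prop :=
  (0 < size S)%N /\ sT S 0 = 0 /\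
  (forall i, (i < size S)%N -> sT S i < dT S i) /\
  (forall i j, (i <= j)%N -> (j < size S)%N -> sT S i <= sT S j).

Definition present (S : seq (R * R)) (t : R) (i : nat) : Prop :=
  (i < size S)%N /\ sT S i <= t /\ t <= dT S i.

Definition horizon (S : seq (R * R)) : R := \big[Num.max/0]_(p <- S) p.2.

(* d_min(t; X), as an extended real (+oo if no point is present). *)
Definition dmin (P : set 'rV[R]_k) (S : seq (R * R)) (X : nat -> 'rV[R]_k)
    (t : R) : \bar R :=
  ereal_inf ([set (dis_bd P (X i))%:E | i in present S t] `|`
             [set e | exists i j, present S t i /\ present S t j /\ i <> j /\
                                  e = (eucl (X i) (X j))%:E]).

Definition value (P : set 'rV[R]_k) (S : seq (R * R)) (X : nat -> 'rV[R]_k)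
    : \bar R :=
  ereal_inf [set dmin P S X t | t in [set t : R | t <= horizon S]].

Definition OPT (P : set 'rV[R]_k) (S : seq (R * R)) : \bar R :=
  ereal_sup [set value P S X | X in
     [set X : nat -> 'rV[R]_k | forall i, (i < size S)%N -> P (X i)]].

(* What is known when point i arrives: the arrival times of earlier points,
   and the departure times of those earlier points that have already
   departed (d_j < s_i); plus the arrival time s_i itself. *)
Definition history (S : seq (R * R)) (i : nat) : seq (R * option R) :=
  [seq (p.1, if p.2 < sT S i then Some p.2 else None) | p <- take i S].

(* A deterministic online algorithm (for a fixed polytope): maps the known
   past and the current arrival time to a location. It does not know n. *)
Definition online_alg := seq (R * option R) -> R -> 'rV[R]_k.

Definition output (A : online_alg) (S : seq (R * R)) (i : nat) : 'rV[R]_k :=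
  A (history S i) (sT S i).

Definition competitive (P : set 'rV[R]_k) (A : online_alg) (sigma : R) : Prop :=
  forall S, valid_instance S ->
    (forall i, (i < size S)%N -> P (output A S i)) /\
    (OPT P S <= sigma%:E * value P S (output A S))%E.

End ATWC.

(* Main.v *)
Require Import Defs.
From HB Require Import structures.
From mathcomp Require Import all_boot all_order all_algebra.
From mathcomp Require Import all_classical all_reals all_analysis.
From mathcomp Require Import ring lra zify.
Import numFieldNormedType.Exports.
Import Order.TTheory GRing.Theory Num.Theory.
Local Open Scope classical_set_scope.
Local Open Scope ring_scope.
Section N.
Variables (R : realType) (k : nat).
Implicit Types (x y : 'rV[R]_k).
Definition ns x : R := \sum_(i < k) (x ord0 i) ^+ 2.
Definition nrm x : R := Num.sqrt (ns x).
Lemma ns_ge0 x : 0 <= ns x.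
Proof. by apply: sumr_ge0 => i _; rewrite sqr_ge0. Qed.
Lemma nrm_ge0 x : 0 <= nrm x. Proof. exact: sqrtr_ge0. Qed.
Lemma nrm_sq x : nrm x ^+ 2 = ns x. Proof. by rewrite sqr_sqrtr // ns_ge0. Qed.
Lemma euclE x y : eucl x y = nrm (x - y).
Proof. by rewrite /eucl /nrm /ns; congr Num.sqrt; apply: eq_bigr => i _; rewrite !mxE. Qed.
Definition dot x y : R := \sum_(i < k) x ord0 i * y ord0 i.
Lemma CS x y : dot x y ^+ 2 <= ns x * ns y.
Proof.
set A := ns x; set B := ns y; set C := dot x y.
have H : 0 <= \sum_(i < k) (A * y ord0 i - C * x ord0 i) ^+ 2.
  by apply: sumr_ge0 => i _; rewrite sqr_ge0.
have E : \sum_(i < k) (A * y ord0 i - C * x ord0 i) ^+ 2 = A * (A * B - C ^+ 2).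
  have -> : \sum_(i < k) (A * y ord0 i - C * x ord0 i) ^+ 2 =
     \sum_(i < k) (A^+2 * (y ord0 i)^+2 - (2 * A * C) * (x ord0 i * y ord0 i) + C^+2 * (x ord0 i)^+2).
    by apply: eq_bigr => i _; ring.
  rewrite big_split /= big_split /= sumrN -!mulr_sumr.
  have e1 : \sum_(i < k) y ord0 i ^+ 2 = B by [].
  have e2 : \sum_(i < k) x ord0 i ^+ 2 = A by [].
  have e3 : \sum_(i < k) x ord0 i * y ord0 i = C by [].
  rewrite e1 e2 e3; ring.
rewrite E in H.
have A0 : 0 <= A by exact: ns_ge0.
case: (ltrP 0 A) => [Apos|Ale].
  by rewrite -subr_ge0; rewrite pmulr_rge0 // in H.
have A00 : A = 0 by apply/eqP; rewrite eq_le Ale A0.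
have hx0 : forall i, x ord0 i = 0.
  move=> i; apply/eqP; rewrite -sqrf_eq0; apply/eqP.
  have : (x ord0 i)^+2 <= A.
    rewrite /A /ns (bigD1 i) //= lerDl; by apply: sumr_ge0 => ? _; rewrite sqr_ge0.
  by rewrite A00 => h; apply/eqP; rewrite eq_le h sqr_ge0.
have C0 : C = 0.
  rewrite /C /dot big1 // => j _; by rewrite hx0 mul0r.
rewrite C0.
by rewrite A00 expr0n /= mul0r.
Qed.
Lemma ns_add x y : ns (x + y) = ns x + 2 * dot x y + ns y.
Proof.
rewrite /ns /dot mulr_sumr -!big_split /=; apply: eq_bigr => i _; rewrite mxE; ring.
Qed.
Lemma dot_le x y : dot x y <= nrm x * nrm y.
Proof.
have h := CS x y; rewrite -!nrm_sq in h.
have := nrm_ge0 x; have := nrm_ge0 y.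
set a := nrm x; set b := nrm y; set d := dot x y => hb ha.
have [//|gt] := lerP d (a * b).
have p : 0 < (d - a * b) * (d + a * b).
  apply: mulr_gt0; first by rewrite subr_gt0.
  have := mulr_ge0 ha hb; lra.
have e : (d - a * b) * (d + a * b) = d ^+ 2 - a ^+ 2 * b ^+ 2 by ring.
rewrite e /a /b /d in p; lra.
Qed.
Lemma nrm_triangle x y : nrm (x + y) <= nrm x + nrm y.
Proof.
rewrite -ler_sqr ?nnegrE ?addr_ge0 ?nrm_ge0 // nrm_sq ns_add.
have := dot_le x y; rewrite -!nrm_sq => h; nra.
Qed.
Lemma nsZ (a : R) x : ns (a *: x) = a ^+ 2 * ns x.
Proof. rewrite /ns mulr_sumr; apply: eq_bigr => i _; rewrite mxE; ring. Qed.
Lemma nrmZ (a : R) x : nrm (a *: x) = `|a| * nrm x.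
Proof. by rewrite /nrm nsZ sqrtrM ?sqr_ge0 // sqrtr_sqr. Qed.
Lemma nrmN x : nrm (- x) = nrm x.
Proof. by rewrite -scaleN1r nrmZ normrN normr1 mul1r. Qed.
Lemma nrmB x y : nrm (x - y) = nrm (y - x).
Proof. by rewrite -nrmN opprB. Qed.
Lemma nrm_sub_ge x y : nrm x - nrm y <= nrm (x - y).
Proof. have := nrm_triangle (x - y) y; rewrite subrK; lra. Qed.
Lemma coord_sq_le x j : (x ord0 j) ^+ 2 <= ns x.
Proof. rewrite /ns (bigD1 j) //= lerDl; by apply: sumr_ge0 => ? _; rewrite sqr_ge0. Qed.
Lemma coord_le x (i : 'I_1) j : `|x i j| <= nrm x.
Proof.
rewrite (ord1 i) -(sqrtr_sqr (x ord0 j)) /nrm; apply: ler_wsqrtr; exact: coord_sq_le.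
Qed.
Lemma ns_bound x e : (forall j, `|x ord0 j| <= e) -> ns x <= k%:R * e ^+ 2.
Proof.
move=> h; rewrite /ns -[k in k%:R]card_ord -sum1_card natr_sum mulr_suml.
apply: ler_sum => j _; rewrite mul1r -real_normK ?num_real //.
by apply: lerXn2r; rewrite ?nnegrE ?normr_ge0 // (le_trans _ (h j)).
Qed.
Lemma nrm0_eq x : nrm x = 0 -> x = 0.
Proof.
move=> h; apply/matrixP => i j; rewrite mxE; apply/eqP; rewrite -normr_le0 -h.
exact: coord_le.
Qed.
Lemma interior_ball (P : set 'rV[R]_k) r y : (0 < k)%N ->
  (forall z, nrm z <= r -> P z) -> nrm y < r -> interior P y.
Proof.
move=> k0 hP hy; rewrite /interior; apply/nbhs_ballP.
exists ((r - nrm y) / k%:R); first by rewrite /= divr_gt0 ?ltr0n ?subr_gt0.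
move=> z [_ hz]; apply: hP.
have hk : 1 <= k%:R :> R by rewrite ler1n.
have : ns (z - y) <= (r - nrm y) ^+ 2.
  apply: le_trans (@ns_bound _ ((r - nrm y) / k%:R) _) _.
    move=> j; have := hz ord0 j; rewrite /ball /= => h. rewrite !mxE distrC; exact: ltW.
  have kp : 0 < k%:R :> R by rewrite ltr0n.
  have -> : k%:R * ((r - nrm y) / k%:R) ^+ 2 = (r - nrm y) ^+ 2 / k%:R.
    by field; rewrite gt_eqF.
  rewrite ler_pdivrMr //; have := sqr_ge0 (r - nrm y); nra.
move=> hn.
have : nrm (z - y) <= r - nrm y.
  rewrite /nrm -(ger0_norm (x := r - nrm y)) ?subr_ge0 ?(ltW hy) // -sqrtr_sqr; exact: ler_wsqrtr.
have := nrm_triangle (z - y) y; rewrite subrK; lra.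
Qed.
Lemma exit_point (P : set 'rV[R]_k) : (0 < k)%N ->
  (forall z, P z -> ns z <= 1) -> forall x, P x ->
  exists y, boundary P y /\ nrm (x - y) <= 1 - nrm x.
Proof.
move=> k0 hP x Px.
pose i0 : 'I_k := Ordinal k0.
pose e0 : 'rV[R]_k := delta_mx ord0 i0.
pose u := if nrm x == 0 then e0 else (nrm x)^-1 *: x.
have nu : nrm u = 1.
  rewrite /u; case: ifP => [_|/negbT h].
    rewrite /nrm /ns (bigD1 i0) //= big1 ?addr0 ?mxE ?eqxx ?expr1n ?sqrtr1 //.
    by move=> j hj; rewrite mxE eqxx /= (negbTE hj) /= expr0n.
  rewrite nrmZ ger0_norm ?invr_ge0 ?nrm_ge0 // mulVf //.
have xu : x = nrm x *: u.
  rewrite /u; case: ifP => [/eqP h|/negbT h].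
    by rewrite h scale0r; apply: nrm0_eq.
  by rewrite scalerA mulfV // scale1r.
have uc : forall i j, `|u i j| <= 1 by move=> i j; rewrite -nu coord_le.
pose E := [set t : R | 0 <= t /\ P (t *: u)].
have Ex : E (nrm x) by split; [exact: nrm_ge0| rewrite -xu].
have ub : forall t, E t -> t <= 1.
  move=> t [t0 /hP]; rewrite nsZ -nrm_sq nu expr1n mulr1 => h; nra.
have hs : has_sup E by split; [exists (nrm x) | exists 1 => t /ub].
pose ts := sup E.
have tsub : forall t, E t -> t <= ts by move=> t; exact: sup_upper_bound.
have ts1 : ts <= 1 by apply: ge_sup; [exists (nrm x)| move=> t /ub].
have tsx : nrm x <= ts by exact: tsub.
exists (ts *: u); split; last first.
  rewrite {1}xu -scalerBl nrmZ nu mulr1 ler0_norm ?subr_le0 //; lra.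
split.
  move=> B /nbhs_ballP [e /= epos hB].
  have [t Et ht] := sup_adherent epos hs.
  exists (t *: u); split; first by case: Et.
  apply: hB; split => // i j; rewrite /ball /= !mxE -mulrBl normrM.
  rewrite ger0_norm ?subr_ge0 ?tsub //.
  have := tsub _ Et; have := uc i j; have := normr_ge0 (u i j).
  rewrite -/ts in ht; nra.
move=> /nbhs_ballP [e /= epos hB].
have : E (ts + e / 2).
  split; first by have := nrm_ge0 x; lra.
  apply: hB; split => // i j; rewrite /ball /= !mxE -mulrBl normrM.
  have -> : ts - (ts + e / 2) = - (e / 2) by ring.
  have e2 : 0 <= e / 2 by lra.
  rewrite normrN (ger0_norm e2).
  apply: (le_lt_trans (y := e / 2)); last lra.
  by rewrite ler_piMr //; exact: uc.
move/tsub; lra.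
Qed.
Lemma dis_le (P : set 'rV[R]_k) x y : boundary P y -> dis_bd P x <= eucl x y.
Proof.
move=> hby; apply: ge_inf; last by exists y.
exists 0 => _ [z _ <-]; exact: sqrtr_ge0.
Qed.
Lemma dis_ge0 (P : set 'rV[R]_k) x : 0 <= dis_bd P x.
Proof.
rewrite /dis_bd; have [[y hy]|nb] := pselect (exists y, boundary P y).
  apply: lb_le_inf; first by exists (eucl x y), y.
  move=> _ [z _ <-]; exact: sqrtr_ge0.
have -> : [set eucl x y | y in boundary P] = set0.
  apply/seteqP; split => // e [z hz _]; exfalso; apply: nb; exists z; exact: hz.
by rewrite inf0.
Qed.
Lemma dis_ge (P : set 'rV[R]_k) x r : (exists y, boundary P y) ->
  (forall y, boundary P y -> r <= eucl x y) -> r <= dis_bd P x.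
Proof.
move=> [y0 hy0] h; apply: lb_le_inf; first by exists (eucl x y0), y0.
by move=> _ [z hz <-]; apply: h.
Qed.
Lemma eucl_ge0 x y : 0 <= eucl x y. Proof. exact: sqrtr_ge0. Qed.

Local Open Scope ereal_scope.
Lemma value_le (P : set 'rV[R]_k) S X t : (t <= horizon S)%R ->
  value P S X <= dmin P S X t.
Proof. by move=> ht; apply: ereal_inf_lbound; exists t. Qed.
Lemma dmin_le_dis (P : set 'rV[R]_k) S X t i : present S t i ->
  dmin P S X t <= (dis_bd P (X i))%:E.
Proof. by move=> hi; apply: ereal_inf_lbound; left; exists i. Qed.
Lemma dmin_le_pair (P : set 'rV[R]_k) S X t i j : present S t i ->
  present S t j -> i <> j -> dmin P S X t <= (eucl (X i) (X j))%:E.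
Proof. by move=> hi hj ij; apply: ereal_inf_lbound; right; exists i, j. Qed.
Lemma value_ge (P : set 'rV[R]_k) S X (r : R) :
  (forall t i, present S t i -> (r <= dis_bd P (X i))%R) ->
  (forall t i j, present S t i -> present S t j -> i <> j ->
     (r <= eucl (X i) (X j))%R) ->
  r%:E <= value P S X.
Proof.
move=> h1 h2; apply: le_ereal_inf_tmp => _ [t _ <-].
apply: le_ereal_inf_tmp => _ [[i hi <-]|[i [j [hi [hj [ij ->]]]]]].
  by rewrite lee_fin; apply: h1 hi.
by rewrite lee_fin; apply: h2 hi hj ij.
Qed.
Lemma value_le_OPT (P : set 'rV[R]_k) S X :
  (forall i, (i < size S)%N -> P (X i)) -> value P S X <= OPT P S.
Proof. by move=> h; apply: ereal_sup_ubound; exists X. Qed.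
Local Close Scope ereal_scope.
Lemma jensen1 (I : finType) (w a : I -> R) : (forall j, 0 <= w j) ->
  \sum_j w j = 1 -> (\sum_j w j * a j) ^+ 2 <= \sum_j w j * a j ^+ 2.
Proof.
move=> w0 w1; set m := \sum_j w j * a j.
have h : 0 <= \sum_j w j * (a j - m) ^+ 2.
  by apply: sumr_ge0 => j _; rewrite mulr_ge0 ?sqr_ge0.
have e : forall c, \sum_j w j * (a j - c) ^+ 2 =
    \sum_j w j * a j ^+ 2 - 2 * c * (\sum_j w j * a j) + c ^+ 2 * \sum_j w j.
  move=> c; rewrite !mulr_sumr -sumrN -!big_split /=; apply: eq_bigr => j _; ring.
rewrite e w1 -/m in h; lra.
Qed.
Lemma jensen (I : finType) (w : I -> R) (v : I -> 'rV[R]_k) :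
  (forall j, 0 <= w j) -> \sum_j w j = 1 ->
  ns (\sum_j w j *: v j) <= \sum_j w j * ns (v j).
Proof.
move=> w0 w1; rewrite /ns.
under eq_bigr => i _ do rewrite summxE.
under [X in _ <= X]eq_bigr => j _ do rewrite mulr_sumr.
rewrite exchange_big /=; apply: ler_sum => i _.
under eq_bigr => j _ do rewrite mxE.
exact: jensen1.
Qed.
Lemma nrm_delta i : nrm (delta_mx ord0 i : 'rV[R]_k) = 1.
Proof.
rewrite /nrm /ns (bigD1 i) //= big1 ?addr0 ?mxE ?eqxx ?expr1n ?sqrtr1 //.
by move=> j hj; rewrite mxE eqxx /= (negbTE hj) /= expr0n.
Qed.

Section Poly.
Variable M : nat.
Definition Tidx := ({ffun 'I_k -> 'I_(2 * M).+1} * 'I_k.+1)%type.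
Definition gpt (f : {ffun 'I_k -> 'I_(2 * M).+1}) : 'rV[R]_k :=
  \row_i (((f i : nat)%:R - M%:R) / M%:R).
Definition Lc : R := k%:R / M%:R.
Definition raw (t : Tidx) : 'rV[R]_k :=
  gpt t.1 + (if unlift ord0 t.2 is Some i then Lc *: delta_mx ord0 i else 0).
Definition vt (t : Tidx) : 'rV[R]_k := if ns (raw t) <= 1 then raw t else 0.
Definition mP := #|{: Tidx}|.
Definition vv (j : 'I_mP) := vt (enum_val j).
Definition Pset : set 'rV[R]_k := [set x | exists w : 'I_mP -> R,
  (forall j, 0 <= w j) /\ \sum_(j < mP) w j = 1 /\ x = \sum_(j < mP) w j *: vv j].
Definition Wt f (d : 'rV[R]_k) (t : Tidx) : R :=
  if t.1 == f then (if unlift ord0 t.2 is Some i then d ord0 i / Lc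
                    else 1 - \sum_i d ord0 i / Lc) else 0.

Lemma sumT (V : nmodType) (F : Tidx -> V) :
  \sum_(j < mP) F (enum_val j) = \sum_t F t.
Proof. by rewrite -big_enum_val. Qed.

Lemma sum_f (V : nmodType) (F : Tidx -> V) f :
  (forall t, t.1 != f -> F t = 0) ->
  \sum_t F t = F (f, ord0) + \sum_(i < k) F (f, lift ord0 i).
Proof.
move=> h; rewrite (eq_bigr (fun t => F (t.1, t.2))); last by case.
rewrite -(pair_bigA _ (fun a b => F (a, b))) /= (bigD1 f) //= [X in _ + X]big1 ?addr0; last first.
  move=> g hg; rewrite big1 // => o _; exact: h.
exact: big_ord_recl.
Qed.
Lemma comb f d : (0 < M)%N -> (0 < k)%N -> (forall o, ns (raw (f, o)) <= 1) ->
  \sum_t Wt f d t = 1 /\ \sum_t Wt f d t *: vt t = gpt f + d.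
Proof.
move=> M0 k0 hr.
have L0 : Lc != 0 by rewrite /Lc mulf_neq0 ?invr_eq0 ?pnatr_eq0 -?lt0n.
have vr : forall o, vt (f, o) = raw (f, o) by move=> o; rewrite /vt hr.
split.
  rewrite (@sum_f _ (Wt f d) f); last by move=> t ht; rewrite /Wt (negbTE ht).
  rewrite /Wt /= eqxx unlift_none.
  rewrite [X in _ + X](eq_bigr (fun i => d ord0 i / Lc)); last by move=> i _; rewrite liftK.
  by rewrite subrK.
rewrite (@sum_f _ (fun t => Wt f d t *: vt t) f); last first.
  by move=> t ht; rewrite /Wt (negbTE ht) scale0r.
rewrite /Wt /= eqxx unlift_none.
rewrite [X in _ + X](eq_bigr (fun i => (d ord0 i / Lc) *: gpt f + d ord0 i *: delta_mx ord0 i)); last first.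
  by move=> i _; rewrite vr /raw /= liftK scalerDr scalerA divfK.
rewrite vr /raw /= unlift_none addr0.
rewrite big_split /=.
have -> : \sum_(i < k) d ord0 i *: delta_mx ord0 i = d by rewrite [RHS]row_sum_delta.
rewrite -(@scaler_suml _ _ (gpt f)) scalerBl scale1r.
by rewrite addrA subrK.
Qed.
Lemma ns0 : ns (0 : 'rV[R]_k) = 0.
Proof. by rewrite /ns big1 // => i _; rewrite mxE expr0n. Qed.
Lemma vt_ns t : ns (vt t) <= 1.
Proof. by rewrite /vt; case: ifP => // _; rewrite ns0. Qed.
Lemma Pset_out z : Pset z -> ns z <= 1.
Proof.
move=> [w [w0 [w1 ->]]]; apply: le_trans (jensen _ _ _ w0 w1) _.
rewrite -[leRHS]w1; apply: ler_sum => j _; rewrite ler_piMr //; exact: vt_ns.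
Qed.
Lemma to_Pset f d : (0 < M)%N -> (0 < k)%N -> (forall o, ns (raw (f, o)) <= 1) ->
  (forall t, 0 <= Wt f d t) -> Pset (gpt f + d).
Proof.
move=> M0 k0 hr hw; have [s1 s2] := comb f d M0 k0 hr.
exists (fun j => Wt f d (enum_val j)); split => //; split.
  by rewrite (sumT _ (Wt f d)).
by rewrite /vv (sumT _ (fun t => Wt f d t *: vt t)).
Qed.
Lemma raw_nrm f o : nrm (raw (f, o)) <= nrm (gpt f) + `|Lc|.
Proof.
rewrite /raw /=; case: (unlift ord0 o) => [i|].
  by apply: le_trans (nrm_triangle _ _) _; rewrite nrmZ nrm_delta mulr1.
rewrite addr0 lerDl; exact: normr_ge0.
Qed.
Lemma nrm_le1 z : nrm z <= 1 -> ns z <= 1.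
Proof. move=> h; rewrite -nrm_sq; have := nrm_ge0 z; nra. Qed.
Lemma Pset_in x : (0 < M)%N -> (0 < k)%N -> nrm x <= 1 - 2 * Lc -> Pset x.
Proof.
move=> M0 k0 hx.
have Mp : 0 < M%:R :> R by rewrite ltr0n.
have kp : 0 < k%:R :> R by rewrite ltr0n.
have k1 : 1 <= k%:R :> R by rewrite ler1n.
have Lp : 0 < Lc by rewrite /Lc divr_gt0.
have xi : forall i, `|x ord0 i| <= 1.
  move=> i; apply: le_trans (coord_le _ _ _) _; lra.
pose y i := M%:R * x ord0 i + M%:R.
have y0 : forall i, 0 <= y i.
  move=> i; have := xi i; rewrite ler_norml => /andP [h1 h2]; rewrite /y; nra.
have y2 : forall i, y i <= 2 * M%:R.
  move=> i; have := xi i; rewrite ler_norml => /andP [h1 h2]; rewrite /y; nra.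
pose f : {ffun 'I_k -> 'I_(2 * M).+1} := [ffun i => inord (Num.truncn (y i))].
have hf : forall i, (f i : nat) = Num.truncn (y i).
  move=> i; rewrite ffunE inordK // ltnS truncn_le_nat.
  apply: le_lt_trans (y2 i) _; rewrite -natrM ltr_nat; lia.
pose d := x - gpt f.
have hd : forall i, d ord0 i = (y i - (Num.truncn (y i))%:R) / M%:R.
  move=> i; rewrite /d !mxE hf /y; field; lra.
have d0 : forall i, 0 <= d ord0 i.
  move=> i; rewrite hd; apply: divr_ge0; last exact: ltW.
  rewrite subr_ge0 truncn_le; exact: y0.
have d1 : forall i, d ord0 i <= 1 / M%:R.
  move=> i; rewrite hd ler_pM2r ?invr_gt0 //.
  have := truncnS_gt (y i); rewrite -natr1; lra.
have hnd : nrm d <= Lc.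
  have : ns d <= Lc ^+ 2.
    apply: le_trans (@ns_bound _ (1 / M%:R) _) _.
      by move=> i; rewrite ger0_norm.
    have e1 : k%:R * (1 / M%:R) ^+ 2 = k%:R * (M%:R ^+ 2)^-1 :> R.
      by field; rewrite gt_eqF.
    have e2 : Lc ^+ 2 = k%:R ^+ 2 * (M%:R ^+ 2)^-1.
      by rewrite /Lc; field; rewrite gt_eqF.
    rewrite e1 e2 ler_pM2r ?invr_gt0 ?exprn_gt0 //; nra.
  by move=> h; rewrite /nrm -(ger0_norm (ltW Lp)) -sqrtr_sqr; apply: ler_wsqrtr.
have xd : x = gpt f + d by rewrite /d addrC subrK.
rewrite xd; apply: to_Pset => //.
  move=> o; apply: nrm_le1; apply: le_trans (raw_nrm _ _) _.
  rewrite (ger0_norm (ltW Lp)).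
  have : nrm (gpt f) <= nrm x + nrm d.
    have -> : gpt f = x - d by rewrite /d opprB addrC subrK.
    by apply: le_trans (nrm_triangle _ _) _; rewrite nrmN.
  lra.
move=> [g o]; rewrite /Wt /=; case: eqP => // _.
case: (unlift ord0 o) => [i|]; first by rewrite divr_ge0 ?d0 ?ltW.
rewrite subr_ge0.
apply: le_trans (ler_sum (index_enum _) (fun i _ => _ : d ord0 i / Lc <= 1 / k%:R)) _.
  move=> i; rewrite ler_pdivrMr // /Lc; have := d1 i.
  have -> : 1 / k%:R * (k%:R / M%:R) = 1 / M%:R :> R by field; apply/andP; split; lra.
  done.
have e : (1 / k%:R : R) *+ k = 1 by rewrite -mulr_natr; field; rewrite gt_eqF.
by rewrite sumr_const card_ord e.
Qed.
Lemma Pset_kpoly : (0 < M)%N -> (0 < k)%N -> (k <= M)%N -> kpolytope Pset.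
Proof.
move=> M0 k0 kM; exists mP, vv; split => // x.
pose f0 : {ffun 'I_k -> 'I_(2 * M).+1} := [ffun _ => inord M].
have g0 : gpt f0 = 0.
  apply/matrixP => i j; rewrite !mxE ffunE inordK ?subrr ?mul0r //; lia.
have hr : forall o, ns (raw (f0, o)) <= 1.
  move=> o; apply: nrm_le1; apply: le_trans (raw_nrm _ _) _.
  rewrite g0 /nrm ns0 sqrtr0 add0r /Lc ger0_norm ?divr_ge0 //.
  by rewrite ler_pdivrMr ?ltr0n // mul1r ler_nat.
have [s1 s2] := comb f0 x M0 k0 hr.
exists (fun j => Wt f0 x (enum_val j)); split.
  by rewrite (sumT _ (Wt f0 x)).
by rewrite /vv (sumT _ (fun t => Wt f0 x t *: vt t)) s2 g0 add0r.
Qed.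
End Poly.
Lemma ereal_helper (V : \bar R) (a b s : R) : 0 < a ->
  (a%:E <= s%:E * V)%E -> (0%:E <= V)%E -> (V <= b%:E)%E -> 0 < s /\ a <= s * b.
Proof.
move=> a0; case: V => [v| |] //= h1 h2 h3.
rewrite -EFinM !lee_fin in h1 h2 h3.
have sp : 0 < s.
  rewrite ltNge; apply/negP => s0.
  have : s * v <= 0 by rewrite mulr_le0_ge0.
  lra.
split => //; apply: le_trans h1 _; rewrite ler_pM2l //.
Qed.

Lemma main_contra (hk : (2 <= k)%N) (sigma : R) (hs : sigma < 7%:R / 6%:R)
  (A : set 'rV[R]_k -> online_alg R k) :
  ~ (forall P, kpolytope P -> competitive P (A P) sigma).
Proof.
move=> hA.
have k0 : (0 < k)%N by lia.
have kp : 0 < k%:R :> R by rewrite ltr0n.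
pose g := Num.min 1 (1 - sigma * 6%:R / 7%:R).
have gp : 0 < g by rewrite lt_min ltr01 /=; lra.
have g1 : g <= 1 by rewrite ge_min lexx.
have g2 : g <= 1 - sigma * 6%:R / 7%:R by rewrite ge_min lexx orbT.
pose M := (Num.truncn (2 * k%:R / g)).+1.
have M0 : (0 < M)%N by [].
have Mp : 0 < M%:R :> R by rewrite ltr0n.
have hM : 2 * k%:R / g < M%:R by exact: truncnS_gt.
have hM2 : 2 * k%:R < g * M%:R by rewrite -ltr_pdivrMl // mulrC.
have kM : (k <= M)%N.
  rewrite -(ler_nat R); have : g * M%:R <= M%:R by rewrite ler_piMl // ltW.
  lra.
have L2 : 2 * Lc M < g.
  by rewrite /Lc mulrA ltr_pdivrMr // mulrC.
pose r0 := 1 - 2 * Lc M.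
have r0p : 0 < r0 by rewrite /r0; lra.
have r0s : sigma * 6%:R < 7%:R * r0 by rewrite /r0; lra.
pose P := Pset M.
have Pout : forall z, P z -> ns z <= 1 by move=> z; exact: Pset_out.
have Pin : forall z, nrm z <= r0 -> P z by move=> z hz; exact: Pset_in.
have comp := hA P (Pset_kpoly M M0 k0 kM).
have P0 : P 0 by apply: Pin; rewrite /nrm ns0 sqrtr0 ltW.
have bne : exists y, boundary P y.
  by have [y [hy _]] := exit_point P k0 Pout 0 P0; exists y.
have bfar : forall y, boundary P y -> r0 <= nrm y.
  move=> y [_ hy]; rewrite leNgt; apply/negP => hlt; apply: hy.
  exact: interior_ball k0 Pin hlt.
have dis_up : forall x, P x -> dis_bd P x <= 1 - nrm x.
  move=> x Px; have [y [hy hxy]] := exit_point P k0 Pout x Px.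
  by apply: le_trans (dis_le P x y hy) _; rewrite euclE.
have dis_lo : forall x, r0 - nrm x <= dis_bd P x.
  move=> x; apply: dis_ge => // y hy; rewrite euclE nrmB.
  apply: le_trans (nrm_sub_ge _ _); have := bfar y hy; lra.
pose S1 : seq (R * R) := [:: (0, 1)].
have v1 : valid_instance S1.
  split => //; split => //; split.
    by case => // _; rewrite /sT /dT /=; lra.
  by case => [|i] [|j] //.
have [in1 opt1] := comp S1 v1.
pose X1 := output (A P) S1 0.
have PX1 : P X1 by exact: in1 0%N isT.
have lbA : (r0%:E <= OPT P S1)%E.
  apply: le_trans (value_le_OPT P S1 (fun _ => 0) (fun _ _ => P0)).
  apply: value_ge.
    move=> t i _; apply: le_trans (dis_lo 0); rewrite /nrm ns0 sqrtr0 subr0 //.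
  by move=> t [|[|i]] [|[|j]] [] // _ _ [] //.
have ubA : (value P S1 (output (A P) S1) <= (dis_bd P X1)%:E)%E.
  apply: le_trans (value_le P S1 _ 0 _) _.
    by rewrite /horizon big_cons big_nil /= le_max ler01.
  apply: dmin_le_dis; split => //; rewrite /sT /dT /=; lra.
have geA : (0%:E <= value P S1 (output (A P) S1))%E.
  apply: value_ge => *; [exact: dis_ge0 | exact: eucl_ge0].
have [sp hA1] := ereal_helper _ _ _ _ r0p (le_trans lbA opt1) geA ubA.
have dA : r0 <= sigma * (1 - nrm X1).
  apply: le_trans hA1 _; rewrite ler_pM2l //; exact: dis_up.
pose S2 : seq (R * R) := [:: (0, 2); (1, 2)].
have v2 : valid_instance S2.
  split => //; split => //; split.
    by case => [|[|i]] // _; rewrite /sT /dT /=; lra.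
  by case => [|[|i]] [|[|j]] //= _ _; rewrite /sT /=; lra.
have [in2 opt2] := comp S2 v2.
have eX1 : output (A P) S2 0 = X1 by [].
pose X2 := output (A P) S2 1.
have PX2 : P X2 by exact: in2 1%N isT.
pose i0 : 'I_k := Ordinal k0.
pose u : 'rV[R]_k := (r0 / 3%:R) *: delta_mx ord0 i0.
have nu : nrm u = r0 / 3%:R.
  by rewrite nrmZ nrm_delta mulr1 ger0_norm // divr_ge0 // ltW.
pose Y := fun i : nat => if i == 0%N then u else - u.
have nY : forall i, nrm (Y i) = r0 / 3%:R.
  by move=> i; rewrite /Y; case: ifP => _; rewrite ?nrmN nu.
have PY : forall i, (i < size S2)%N -> P (Y i).
  move=> i _; apply: Pin; rewrite nY; lra.
have lbB : ((2%:R * r0 / 3%:R)%:E <= OPT P S2)%E.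
  apply: le_trans (value_le_OPT P S2 Y PY).
  apply: value_ge.
    move=> t i _; apply: le_trans (dis_lo (Y i)); rewrite nY; lra.
  have n2 : nrm (u + u) = 2%:R * r0 / 3%:R.
    by rewrite -mulr2n -scaler_nat nrmZ nu ger0_norm // mulrA.
  move=> t i j [hi _] [hj _] ij; rewrite euclE /Y.
  case: i hi ij => [|[|i]] // _; case: j hj => [|[|j]] // _ ij //=.
    by rewrite opprK n2.
  by rewrite -opprD nrmN n2.
have ubB : (value P S2 (output (A P) S2) <=
            (Num.min (dis_bd P X2) (eucl X1 X2))%:E)%E.
  apply: le_trans (value_le P S2 _ 1 _) _.
    by rewrite /horizon !big_cons big_nil /= !le_max; apply/orP; left; lra.
  have p0 : present S2 1 0 by split => //; rewrite /sT /dT /=; lra.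
  have p1 : present S2 1 1 by split => //; rewrite /sT /dT /=; lra.
  rewrite EFin_min le_min; apply/andP; split.
    exact: dmin_le_dis.
  by rewrite -eX1; apply: dmin_le_pair.
have geB : (0%:E <= value P S2 (output (A P) S2))%E.
  apply: value_ge => *; [exact: dis_ge0 | exact: eucl_ge0].
have r2 : 0 < 2%:R * r0 / 3%:R by lra.
have [_ hB] := ereal_helper _ _ _ _ r2 (le_trans lbB opt2) geB ubB.
set b := Num.min _ _ in hB.
have b1 : b <= 1 - nrm X2 by rewrite /b ge_min (dis_up X2 PX2).
have b2 : b <= nrm X1 + nrm X2.
  rewrite /b ge_min; apply/orP; right; rewrite euclE.
  by apply: le_trans (nrm_triangle _ _) _; rewrite nrmN.
have bb : b <= (1 + nrm X1) / 2%:R by lra.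
have : 2%:R * r0 / 3%:R <= sigma * ((1 + nrm X1) / 2%:R).
  by apply: le_trans hB _; rewrite ler_pM2l.
move: dA; nra.
Qed.
End N.

Theorem theorem6 (R : realType) (k : nat) (hk : (2 <= k)%N)
    (sigma : R) (hsigma : sigma < 7%:R / 6%:R) :
  ~ exists A : set 'rV[R]_k -> online_alg R k,
      forall P : set 'rV[R]_k, kpolytope P -> competitive P (A P) sigma.
Proof.
move=> [A hA]; exact: (@main_contra R k hk sigma hsigma A hA).
Qed.
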